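(* For $n\ge2$ let $\mathcal{V}_n$ be the arc diagram with $\mathbf{Z}=\{Z_1,\dots,Z_n\}$, $\mathbf{a}=\{a_1,\dots,a_{2n-2}\}$, where $a_1\in Z_1$, $a_{2n-2}\in Z_n$, and $a_{2i},a_{2i+1}\in Z_{i+1}$ for $i=1,\dots,n-2$, with matching $M(a_{2i-1})=M(a_{2i})=i$ for $i=1,\dots,n-1$. Then the differential on the algebra $\mathcal{A}(\mathcal{V}_n)$ is identically zero.
   Context: Strands algebra $\mathcal{A}(n,k)$: the $\mathbb{F}_2$-vector space with basis triples $(S,T,\phi)$, $S,T\subset\{1,\dots,n\}$ of size $k$, $\phi\colon S\to T$ a bijection with $\phi(i)\ge i$; product $(S,T,\phi)(U,V,\psi)=(S,V,\psi\circ\phi)$ if $T=U$ and $\mathrm{inv}(\phi)+\mathrm{inv}(\psi)=\mathrm{inv}(\psi\circ\phi)$, else $0$ (inv = number of pairs $i<j$ with $\phi(i)>\phi(j)$); differential: sum over inversions of the generators obtained by swapping the two images, keeping those with inversion number one less. For an arc diagram $\mathcal{Z}=(\mathbf{Z},\mathbf{a},M)$ with $2k$ points, the extended strands algebra $\mathcal{A}(|Z_1|,\dots,|Z_l|)=\bigoplus\mathcal{A}(|Z_1|,k_1)\otimes\cdots\otimes\mathcal{A}(|Z_l|,k_l)$ ($|Z_j|$ = number of points of $\mathbf{a}$ on $Z_j$; strands stay within segments, differential by the Leibniz rule). For $s\subset\{1,\dots,k\}$ of size $i$: sections $S\subset M^{-1}(s)$ with $M|_S$ bijective onto $s$, $I(s)=\sum_S(S,S,\mathrm{id})$,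 $I=\sum_{|s|=i}I(s)$; for a bijection $\psi\colon S\to T$ ($S,T\subset\{1,\dots,2k\}$) with $\psi(x)>x$, $a_i(S,T,\psi)=\sum_U(S\cup U,T\cup U,\psi\cup\mathrm{id}_U)$ over $U$ disjoint from $S\cup T$ with $|S\cup U|=i$. $\mathcal{A}(\mathcal{Z},i)$ is the subalgebra of $\mathcal{A}(|Z_1|,\dots,|Z_l|)$ generated by the $I(s)$ and all $I\,a_i(S,T,\psi)\,I$, and $\mathcal{A}(\mathcal{Z})=\bigoplus_{i=0}^k\mathcal{A}(\mathcal{Z},i)$. *)

(* Defs.v *)
From mathcomp Require Import all_boot.
Set Implicit Arguments. Unset Strict Implicit. Unset Printing Implicit Defensive.

(* Generic arc diagram data: N = 2k points {0,..,N-1} (0-based a_1..a_N),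
   seg p = index of the segment Z_j containing p (segments are consecutive
   blocks of points), M : points -> {0,..,k-1} the matching. *)
Section Strands.
Variables (N k : nat) (seg : 'I_N -> nat) (M : 'I_N -> 'I_k).

(* A generator (S,T,phi) is a partial map 'I_N -> option 'I_N:
   S = support, T = image, phi = the map. *)
Definition gen := {ffun 'I_N -> option 'I_N}.

Definition supp (f : gen) : {set 'I_N} := [set x | f x != None].
Definition img (f : gen) : {set 'I_N} := [set y | [exists x, f x == Some y]].

Definition valid_gen (f : gen) : bool :=
  [forall x, forall y, ((f x != None) && (f x == f y)) ==> (x == y)] &&
  [forall x, if f x is Some y then (x <= y) && (seg y == seg x) else true].

Definition strict_gen (f : gen) : bool :=
  [forall x, forall y, ((f x != None) && (f x == f y)) ==> (x == y)] &&
  [forall x, if f x is Some y then (x < y) && (seg y == seg x) else true].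

Definition is_inv (f : gen) (p : 'I_N * 'I_N) : bool :=
  (p.1 < p.2) &&
  (match f p.1, f p.2 with Some a, Some b => b < a | _, _ => false end).

Definition inv (f : gen) : nat := #|[set p | is_inv f p]|.

Definition comp (f g : gen) : gen :=
  [ffun x => match f x with Some y => g y | None => None end].

(* product of generators; None means 0 *)
Definition gmul (f g : gen) : option gen :=
  if (img f == supp g) && (inv f + inv g == inv (comp f g))
  then Some (comp f g) else None.

(* F2-vector space with basis gen: an element is the finite set of basis
   vectors with coefficient 1. *)
Definition elt := {set gen}.

Definition add (x y : elt) : elt := (x :|: y) :\: (x :&: y).

Definition mul (x y : elt) : elt :=
  [set h | odd #|[set p in setX x y | gmul p.1 p.2 == Some h]|].

Definition swap (f : gen) (i j : 'I_N) : gen :=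
  [ffun x => if x == i then f j else if x == j then f i else f x].

Definition dgen (f : gen) : elt :=
  [set g | odd #|[set p | is_inv f p && (swap f p.1 p.2 == g)]|
           && (inv g + 1 == inv f)].

Definition d (x : elt) : elt := [set g | odd #|[set f in x | g \in dgen f]|].

Definition idgen (S : {set 'I_N}) : gen :=
  [ffun x => if x \in S then Some x else None].

Definition is_section (s : {set 'I_k}) (S : {set 'I_N}) : bool :=
  ([set M x | x in S] == s) && (#|S| == #|s|).

Definition Iset (s : {set 'I_k}) : elt := [set idgen S | S in is_section s].

Definition Ibig (i : nat) : elt :=
  [set g | odd #|[set s : {set 'I_k} | (#|s| == i) && (g \in Iset s)]|].

Definition ext (f : gen) (U : {set 'I_N}) : gen :=
  [ffun x => if x \in U then Some x else f x].

Definition agen (i : nat) (f : gen) : elt :=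
  [set ext f U | U in [set U : {set 'I_N} |
       [disjoint U & supp f :|: img f] && (#|supp f :|: U| == i)]].

Inductive inAZi (i : nat) : elt -> Prop :=
| AZ0 : inAZi i set0
| AZI (s : {set 'I_k}) : #|s| = i -> inAZi i (Iset s)
| AZa f : strict_gen f -> inAZi i (mul (mul (Ibig i) (agen i f)) (Ibig i))
| AZadd x y : inAZi i x -> inAZi i y -> inAZi i (add x y)
| AZmul x y : inAZi i x -> inAZi i y -> inAZi i (mul x y).

Inductive inAZ : elt -> Prop :=
| AZsum0 : inAZ set0
| AZsumS i x y : i <= k -> inAZi i x -> inAZ y -> inAZ (add x y).

End Strands.

(* The arc diagram V_n: N = 2n-2 points, 0-based point p = a_(p+1).
   Segment (0-based) of p is (p+1)/2, matching M(p) = p/2 (0-based). *)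
Definition Vseg (n : nat) (p : 'I_((n.-1).*2)) : nat := uphalf p.

Lemma V_half_lt n (p : 'I_((n.-1).*2)) : p./2 < n.-1.
Proof. by rewrite ltn_half_double. Qed.

Definition VM (n : nat) (p : 'I_((n.-1).*2)) : 'I_(n.-1) := Ordinal (V_half_lt p).

(* Main.v *)
Require Import Defs.
From mathcomp Require Import all_boot.

Section Good.
Variables (N k : nat) (seg : 'I_N -> nat) (M : 'I_N -> 'I_k).

Definition goodg (g : gen N) : Prop :=
  forall x y, g x = Some y -> (x <= y) && (seg y == seg x).

Definition goode (X : elt N) : Prop := forall g, g \in X -> goodg g.

Lemma goode0 : goode set0.
Proof. by move=> g; rewrite inE. Qed.

Lemma goode_add x y : goode x -> goode y -> goode (Defs.add x y).
Proof.
move=> Hx Hy g; rewrite !inE => /andP[_ /orP[]]; [exact: Hx | exact: Hy].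
Qed.

Lemma goode_mul x y : goode x -> goode y -> goode (Defs.mul x y).
Proof.
move=> Hx Hy h; rewrite inE => Hodd.
have /set0Pn [[f g]] : [set p in setX x y | gmul p.1 p.2 == Some h] != set0.
  by apply: contraTneq Hodd => ->; rewrite cards0.
rewrite !inE /= => /andP[/andP[fx gy] /eqP].
rewrite /gmul; case: ifP => // _ [<-] a c.
rewrite /comp ffunE.
case E: (f a) => [b|] // E2.
have /andP[h1 /eqP h2] := Hx f fx _ _ E.
have /andP[h3 /eqP h4] := Hy g gy _ _ E2.
by rewrite (leq_trans h1 h3) h4 h2 eqxx.
Qed.

Lemma goode_I s : goode (Iset M s).
Proof.
move=> g /imsetP [S _ ->] a c; rewrite /idgen ffunE.
by case: ifP => // _ [<-]; rewrite leqnn eqxx.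
Qed.

Lemma goode_a i f : strict_gen seg f -> goode (agen i f).
Proof.
move=> /andP[_ /forallP Hf] h /imsetP [U _ ->] a c; rewrite /ext ffunE.
case: ifP => _.
  by case=> <-; rewrite leqnn eqxx.
move=> E; have := Hf a; rewrite E => /andP[h1 ->]; by rewrite ltnW.
Qed.

Lemma goode_Ibig i : goode (Ibig M i).
Proof.
move=> g; rewrite inE => Hodd.
have /set0Pn [s] : [set s : {set 'I_k} | (#|s| == i) && (g \in Iset M s)] != set0.
  by apply: contraTneq Hodd => ->; rewrite cards0.
rewrite inE => /andP[_]; exact: goode_I.
Qed.

Lemma goode_AZi i x : inAZi seg M i x -> goode x.
Proof.
elim=> {x}.
- exact: goode0.
- move=> s _; exact: goode_I.
- move=> f Hf; apply: goode_mul; last exact: goode_Ibig.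
  apply: goode_mul; [exact: goode_Ibig | exact: goode_a].
- move=> ? ? _ ? _ ?; exact: goode_add.
- move=> ? ? _ ? _ ?; exact: goode_mul.
Qed.

Lemma goode_AZ x : inAZ seg M x -> goode x.
Proof.
elim=> {x}; first exact: goode0.
move=> i x y _ Hx _ Hy; apply: goode_add => //; exact: goode_AZi Hx.
Qed.

Lemma d_good (x : elt N) : (forall f, f \in x -> forall p, is_inv f p = false) -> d x = set0.
Proof.
move=> H; apply/setP => g; rewrite !inE.
have -> : [set f in x | g \in dgen f] = set0.
  apply/setP => f; rewrite !inE; case fx: (f \in x) => //=.
  rewrite ?inE.
  have -> : [set p | is_inv f p && (swap f p.1 p.2 == g)] = set0.
    by apply/setP => p; rewrite !inE H.
  by rewrite cards0.
by rewrite cards0.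
Qed.

End Good.

Theorem mainTheorem4 (n : nat) : 2 <= n ->
  forall x : elt ((n.-1).*2),
    inAZ (@Vseg n) (@VM n) x -> d x = set0.
Proof.
move=> _ x /goode_AZ Hg; apply: d_good => f /Hg Hf [p1 p2].
rewrite /is_inv /=.
case: ltnP => //= lt12.
case E1: (f p1) => [a|] //; case E2: (f p2) => [b|] //.
apply/negP => ba.
have /andP[h1 /eqP h2] := Hf _ _ E1.
have /andP[h3 /eqP h4] := Hf _ _ E2.
rewrite /Vseg in h2 h4.
have : p1.+2 <= a by apply: leq_ltn_trans ba; apply: leq_trans h3.
move/uphalf_leq; rewrite /= h2.
by rewrite ltnn.
Qed.
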